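(* For all positive integers $r,n$, the length function $\ell$ and the sorting index $\mathsf{sor}$ have the same distribution over $\mathsf{G}_{r,n}$; namely $$\sum_{\pi\in\mathsf{G}_{r,n}}q^{\ell(\pi)}=\sum_{\pi\in\mathsf{G}_{r,n}}q^{\mathsf{sor}(\pi)}=[n]_q!\cdot\prod_{i=1}^n\bigl(1+q^i[r-1]_q\bigr),$$ where $[i]_q=1+q+\cdots+q^{i-1}$ and $[n]_q!=[1]_q[2]_q\cdots[n]_q$.
   Context: $\mathsf{G}_{r,n}=C_r\wr\mathfrak{S}_n$ is the set of pairs $\pi=(\sigma,\mathbf z)$ with $\sigma\in\mathfrak S_n$, $\mathbf z\in(\mathbb Z/r\mathbb Z)^n$, written as the word $\pi=\sigma_1^{[z_1]}\cdots\sigma_n^{[z_n]}$ ($\sigma_i$ = base value, $z_i\in\{0,\dots,r-1\}$ = color of the $i$-th letter; colors are read mod $r$). Product: $(\sigma,\mathbf z)(\rho,\mathbf w)=(\sigma\rho,\mathbf w+\rho(\mathbf z))$ with $\rho(\mathbf z)=(z_{\rho(1)},\dots,z_{\rho(n)})$. Length: let $s_0=1^{[1]}2\cdots n$ and, for $1\le i\le n-1$, let $s_i$ be the element with base permutation the adjacent transposition $(i\ i+1)$ and all colors $0$ (so right multiplication by $s_0$ adds $1$ to the color of the first letter and right multiplication by $s_i$ swaps the letters in positions $i,i+1$). $\ell(\pi)$ is the minimal number of factors needed to write $\pi$ as a product of elements of $\{s_0,\dots,s_{n-1}\}$. Sorting index: for $1\le i<j$ and $t\in\mathbb Z/r$,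 right multiplication of a word $\tau_1^{[y_1]}\cdots\tau_j^{[y_j]}$ by $(i^{[t]}\,j)$ replaces the letter in position $j$ by $\tau_i^{[y_i+t]}$ and the letter in position $i$ by $\tau_j^{[y_j-t]}$. Given $\pi$, set $\pi^{(n)}=\pi$; for $j=n,n-1,\dots,1$ the word $\pi^{(j)}$ has length $j$ and base values $\{1,\dots,j\}$; let $c_j$ be the position in $\pi^{(j)}$ of the letter with base value $j$, $z$ its color, and $e_j\in\{0,\dots,r-1\}$ with $e_j\equiv -z \pmod r$; if $c_j<j$ let $\pi^{(j-1)}$ be the first $j-1$ letters of $\pi^{(j)}\cdot(c_j^{[e_j]}\,j)$ (whose last letter is $j^{[0]}$), and if $c_j=j$ let $\pi^{(j-1)}$ be the first $j-1$ letters of $\pi^{(j)}$. Then $$\mathsf{sor}(\pi)=\sum_{j=1}^n\Bigl(j-c_j+\chi(e_j>0)\bigl(2(c_j-1)+e_j\bigr)\Bigr),$$ where $\chi(A)=1$ if $A$ holds and $0$ otherwise. (This is the total distance travelled in the paper's sorting process.) *)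

(* Defs.v *)
From mathcomp Require Import all_boot all_order all_algebra all_fingroup.
Set Implicit Arguments. Unset Strict Implicit. Unset Printing Implicit Defensive.
Import GRing.Theory.

Section ColoredPerm.
Variables r n : nat.

(* colours: Z/rZ, represented by 'I_r (written 'I_(r.-1.+1), which is 'I_r
   whenever r > 0, the only case considered). *)
Definition color := 'I_(r.-1.+1).
Definition addc (a b : color) : color := inord ((a + b) %% r.-1.+1).
Definition color0 : color := ord0.

(* G_{r,n}: pairs (sigma, z).  Positions and base values are 'I_n
   (0-based: position i, base value sigma i, stand for i+1, sigma(i)+1). *)
Definition Grn := ({perm 'I_n} * {ffun 'I_n -> color})%type.

Definition one_G : Grn := (1%g, [ffun => color0]).

(* (sigma,z)(rho,w) = (sigma rho, w + rho(z)), rho(z)_i = z_{rho(i)};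
   (sigma rho)(i) = sigma(rho(i)), which is (rho * sigma)%g in MathComp. *)
Definition mulG (x y : Grn) : Grn :=
  ((y.1 * x.1)%g, [ffun i => addc (y.2 i) (x.2 (y.1 i))]).

Definition s0 : Grn :=
  (1%g, [ffun i : 'I_n => if val i == 0 then inord 1 else color0]).

Definition gens : seq Grn :=
  s0 :: [seq (tperm i j, [ffun => color0]) |
          i <- enum 'I_n,
          j <- [seq j <- enum 'I_n | val j == (val i).+1]].

Fixpoint reach (k : nat) : {set Grn} :=
  match k with
  | 0 => [set one_G]
  | k'.+1 => [set mulG x s | x in reach k', s in gens]
  end.

(* Coxeter length: the least k such that pi is a product of k generators.
   (The generators generate G_{r,n}, so that least k is < #|{: Grn}|.) *)
Definition len (pi : Grn) : nat := find (fun k => pi \in reach k) (iota 0 #|{: Grn}|.+1).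

(* Sorting index.  A word is a seq of letters (base value, colour) with base
   values 1..j, colours in 0..r-1. *)
Fixpoint sor_aux (j : nat) (w : seq (nat * nat)) : nat :=
  match j with
  | 0 => 0
  | j'.+1 =>
    let c0 := find (fun p : nat * nat => p.1 == j) w in
    let c := c0.+1 in
    let z := (nth (0, 0) w c0).2 in
    let e := (r - z %% r) %% r in
    let contrib := j - c + (if 0 < e then 2 * (c - 1) + e else 0) in
    let w' :=
      if c < j then
        take j' (set_nth (0, 0) w c0
                   ((nth (0, 0) w j').1, ((nth (0, 0) w j').2 + (r - e)) %% r))
      else take j' w in
    contrib + sor_aux j' w'
  end.

Definition word_of (pi : Grn) : seq (nat * nat) :=
  [seq ((val (pi.1 i)).+1, val (pi.2 i)) | i <- enum 'I_n].

Definition sor (pi : Grn) : nat := sor_aux n (word_of pi).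

End ColoredPerm.

Definition qint (i : nat) : {poly int} := (\sum_(k < i) 'X^k)%R.
Definition qfact (n : nat) : {poly int} := (\prod_(1 <= i < n.+1) qint i)%R.

(* Main.v *)
Require Import Defs.
From mathcomp Require Import all_boot all_order all_algebra all_fingroup.
Import GRing.Theory.
From mathcomp Require Import zify.
Set Implicit Arguments. Unset Strict Implicit. Unset Printing Implicit Defensive.

Definition dfl : nat * nat := (0, 0).
Definition bigger (p q : nat * nat) : bool :=
  if p.2 == 0 then (q.2 != 0) || (q.1 < p.1) else (q.2 != 0) && (p.1 < q.1).
Fixpoint invw (w : seq (nat * nat)) : nat :=
  if w is p :: w' then count (bigger p) w' + invw w' else 0.
Definition tm (p : nat * nat) := if p.2 == 0 then 0 else p.1.-1 + p.2.
Definition Lw w := invw w + sumn (map tm w).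

Lemma invw_cat a b : invw (a ++ b) = invw a + invw b + sumn [seq count (bigger p) b | p <- a].
Proof.
elim: a => [|p a IH] /=; first by rewrite addn0.
rewrite IH count_cat; lia.
Qed.

Lemma invw_ins a x b :
  invw (a ++ x :: b) = invw (a ++ b) + count (bigger x) b + count (fun p => bigger p x) a.
Proof.
rewrite !invw_cat /=.
have -> : sumn [seq count (bigger p) (x :: b) | p <- a] =
   count (fun p => bigger p x) a + sumn [seq count (bigger p) b | p <- a].
  by elim: a => [|p a IH] //=; rewrite IH; case: (bigger p x) => /=; lia.
lia.
Qed.

Lemma sumn_tm_ins a x b : sumn (map tm (a ++ x :: b)) = sumn (map tm (a ++ b)) + tm x.
Proof. rewrite !map_cat !sumn_cat /=; lia. Qed.

Lemma Lw_ins a x b :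
  Lw (a ++ x :: b) = Lw (a ++ b) + count (bigger x) b + count (fun p => bigger p x) a + tm x.
Proof. rewrite /Lw invw_ins sumn_tm_ins; lia. Qed.

Lemma Lw_swap a p q b :
  Lw (a ++ q :: p :: b) + bigger p q = Lw (a ++ p :: q :: b) + bigger q p.
Proof.
rewrite /Lw !invw_cat !map_cat !sumn_cat.
have -> : sumn [seq count (bigger x) [:: q, p & b] | x <- a] =
          sumn [seq count (bigger x) [:: p, q & b] | x <- a].
  by apply: congr1; apply: eq_map => x /=; lia.
rewrite /=; lia.
Qed.

Lemma bigger_anti p q : p.1 != q.1 -> bigger p q = ~~ bigger q p.
Proof.
rewrite /bigger => ne; case: (p.2 == 0); case: (q.2 == 0) => /=; move: ne; case: ltngtP => //=; lia.
Qed.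

Definition contrib j c e := j - c + (if 0 < e then 2 * c + e else 0).

Definition insL (r j : nat) (u : seq (nat * nat)) c e := take c u ++ (j.+1, e) :: drop c u.
Definition insS (r j : nat) (u : seq (nat * nat)) c e :=
  if c < j then take c u ++ (j.+1, (r - e) %% r) :: drop c.+1 u ++
                 [:: ((nth dfl u c).1, ((nth dfl u c).2 + e) %% r)]
  else u ++ [:: (j.+1, (r - e) %% r)].

Fixpoint Wl (ins : nat -> nat -> seq (nat * nat) -> nat -> nat -> seq (nat * nat)) r j :=
  match j with
  | 0 => [:: [::]]
  | j'.+1 => [seq ins r j' u ce.1 ce.2 | u <- Wl ins r j',
               ce <- [seq (c, e) | c <- iota 0 j'.+1, e <- iota 0 r]]
  end.

Definition valid r j (w : seq (nat * nat)) :=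
  [&& size w == j, perm_eq (map fst w) (iota 1 j) & all (fun p => p.2 < r) w].

Lemma WlS ins r j : Wl ins r j.+1 = [seq ins r j u ce.1 ce.2 | u <- Wl ins r j,
               ce <- [seq (c, e) | c <- iota 0 j.+1, e <- iota 0 r]].
Proof. by []. Qed.

Lemma size_Wl ins r j : size (Wl ins r j) = j`! * r ^ j.
Proof.
elim: j => [|j IH] //.
rewrite WlS size_allpairs size_allpairs !size_iota IH factS expnS; lia.
Qed.

Lemma Wl_surj ins r :
  (forall j w, valid r j.+1 w -> exists u c e,
      [/\ valid r j u, c < j.+1, e < r & w = ins r j u c e]) ->
  forall j w, valid r j w -> w \in Wl ins r j.
Proof.
move=> H; elim=> [|j IH] w.
  by case: w => //= ? ? /andP[].
move=> /H [u [c [e [vu hc he ->]]]]; rewrite WlS.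
apply: (@allpairs_f _ _ _ (fun u ce => ins r j u ce.1 ce.2) _ _ u (c, e)); first exact: IH.
apply: (@allpairs_f _ _ _ pair); by rewrite mem_iota.
Qed.

Lemma perm_iotaS s j : perm_eq (j.+1 :: s) (iota 1 j.+1) -> perm_eq s (iota 1 j).
Proof.
move=> H; have : perm_eq (j.+1 :: s) (j.+1 :: iota 1 j).
  apply: (perm_trans H); have -> : iota 1 j.+1 = iota 1 (j + 1) by rewrite addn1. rewrite iotaD /= add1n.
  by apply/seq.permP => x; rewrite count_cat /=; lia.
by rewrite perm_cons.
Qed.

Lemma valid_size r j w : valid r j w -> size w = j.
Proof. by case/and3P => /eqP. Qed.

Lemma valid_fst r j w p : valid r j w -> p \in w -> 0 < p.1 <= j.
Proof.
case/and3P => _ pf _ pin.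
have : p.1 \in iota 1 j by rewrite -(perm_mem pf); exact: (map_f (fun x : nat * nat => x.1)).
by rewrite mem_iota; lia.
Qed.

Lemma valid_col r j w p : valid r j w -> p \in w -> p.2 < r.
Proof. by case/and3P => _ _ /allP H /H. Qed.

Lemma valid_idx r j w : valid r j.+1 w ->
  let c := index j.+1 (map fst w) in
  c < j.+1 /\ (nth dfl w c).1 = j.+1.
Proof.
move=> vw c; have sz := valid_size vw.
case/and3P: vw => _ pf _.
have jin : j.+1 \in map fst w by rewrite (perm_mem pf) mem_iota; lia.
have hc : c < size w by rewrite -(size_map fst) index_mem.
split; first by rewrite -sz.
by rewrite -(nth_map dfl 0) // nth_index.
Qed.

Lemma insL_surj r j w : valid r j.+1 w -> exists u c e,
  [/\ valid r j u, c < j.+1, e < r & w = insL r j u c e].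
Proof.
move=> vw; have [hc hp] := valid_idx vw.
set c := index j.+1 (map fst w) in hc hp.
have sz := valid_size vw.
set p := nth dfl w c in hp.
have hw : w = take c w ++ p :: drop c.+1 w by rewrite -drop_nth ?sz // cat_take_drop.
have szt : size (take c w) = c by rewrite size_take sz hc.
exists (take c w ++ drop c.+1 w), c, p.2; split => //.
- case/and3P: vw => _ pf ac; apply/and3P; split.
  + by rewrite size_cat szt size_drop sz; apply/eqP; lia.
  + apply: perm_iotaS; apply: (perm_trans _ pf); apply/seq.permP => x.
    by rewrite [in RHS]hw /= !map_cat !count_cat /= hp; lia.
  + by move: ac; rewrite {1}hw !all_cat /= => /andP[-> /andP[_ ->]].
- by apply: (valid_col vw); rewrite mem_nth ?sz.
- by rewrite /insL take_size_cat // drop_size_cat // {1}hw -hp; case: (p).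
Qed.

Lemma modK1 r e : 0 < r -> e < r -> (r - (r - e) %% r) %% r = e.
Proof.
move=> r0 er; case: e er => [|e] er.
  by rewrite subn0 modnn subn0 modnn.
rewrite (modn_small (m := r - e.+1)); last lia.
rewrite (_ : r - (r - e.+1) = e.+1); last lia.
by rewrite modn_small.
Qed.

Lemma modK2 r z e : z < r -> e < r -> ((z + (r - e)) %% r + e) %% r = z.
Proof.
move=> zr er; rewrite modnDml (_ : z + (r - e) + e = z + r); last lia.
by rewrite -modnDmr modnn addn0 modn_small.
Qed.

Lemma insS_surj r j w : 0 < r -> valid r j.+1 w -> exists u c e,
  [/\ valid r j u, c < j.+1, e < r & w = insS r j u c e].
Proof.
move=> r0; case/lastP: w => [|w' q]; first by case/and3P.
move=> vw; have sz := valid_size vw.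
have [hc hp] := valid_idx vw.
set c := index j.+1 (map fst (rcons w' q)) in hc hp.
set p := nth dfl (rcons w' q) c in hp.
have zr : p.2 < r by apply: (valid_col vw); rewrite mem_nth ?sz.
set e := (r - p.2) %% r.
have er : e < r by rewrite ltn_mod.
have ez : (r - e) %% r = p.2.
  rewrite /e; case: (p.2) zr => [|z] zr; first by rewrite subn0 modnn subn0 modnn.
  rewrite (modn_small (m := r - z.+1)); last lia.
  rewrite (_ : r - (r - z.+1) = z.+1); last lia. by rewrite modn_small.
case/and3P: (vw) => _ pf ac.
have szw : size w' = j by move: sz; rewrite size_rcons => -[].
have qr : q.2 < r by apply: (valid_col vw); rewrite mem_rcons mem_head.
case: (ltnP c j) => hcj.
- have pE : p = nth dfl w' c by rewrite /p nth_rcons szw hcj.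
  have hw : w' = take c w' ++ p :: drop c.+1 w' by rewrite pE -drop_nth ?szw // cat_take_drop.
  have szt : size (take c w') = c by rewrite size_take szw hcj.
  set u := take c w' ++ (q.1, (q.2 + (r - e)) %% r) :: drop c.+1 w'.
  exists u, c, e; split => //.
  + apply/and3P; split.
    * by rewrite size_cat szt /= size_drop szw; apply/eqP; lia.
    * apply: perm_iotaS; apply: (perm_trans _ pf); apply/seq.permP => x.
      by rewrite [in RHS]hw /= map_rcons -cats1 !map_cat !count_cat /= hp; lia.
    * move: ac; rewrite {1}hw all_rcons !all_cat /= => /and3P[_ -> /andP[_ ->]].
      by rewrite ltn_pmod.
  + rewrite /insS hcj /u take_size_cat // drop_cat szt ltnNge leqnSn /= subSnn /= drop0.
    rewrite nth_cat szt ltnn subnn /= modK2 // ez -cats1 {1}hw -catA /=.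
    by rewrite -hp; case: (p); case: (q).
- have cj : c = j by lia.
  have pE : p = q by rewrite /p nth_rcons szw cj ltnn eqxx.
  exists w', c, e; split => //.
  + apply/and3P; split; first by rewrite szw.
    * apply: perm_iotaS; apply: (perm_trans _ pf); apply/seq.permP => x.
      by rewrite map_rcons -cats1 count_cat /= -pE hp; lia.
    * by move: ac; rewrite all_rcons => /andP[].
  + rewrite /insS ltnNge hcj /= ez -cats1 -pE -hp; by case: (p).
Qed.

Lemma Lw_insL r j u c e : size u = j -> all (fun p => p.1 <= j) u -> c <= j ->
  Lw (insL r j u c e) = contrib j c e + Lw u.
Proof.
move=> sz hu hc; rewrite /insL Lw_ins cat_take_drop /contrib.
have hA : all (fun p => p.1 <= j) (take c u) by apply/allP => p /mem_take; apply: (allP hu).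
have hB : all (fun p => p.1 <= j) (drop c u) by apply/allP => p /mem_drop; apply: (allP hu).
have sA : size (take c u) = c by rewrite size_take sz; case: ltngtP hc; lia.
have sB : size (drop c u) = j - c by rewrite size_drop sz.
case: e => [|e].
- have -> : count (bigger (j.+1, 0)) (drop c u) = j - c.
    rewrite (@eq_in_count _ _ predT) ?count_predT ?sB // => p /(allP hB) /=.
    rewrite /bigger /=; lia.
  have -> : count (fun p => bigger p (j.+1, 0)) (take c u) = 0.
    rewrite (@eq_in_count _ _ pred0) ?count_pred0 // => p /(allP hA) /=.
    rewrite /bigger /=; case: (p.2 == 0) => /=; lia.
  rewrite /tm /=; lia.
- have -> : count (bigger (j.+1, e.+1)) (drop c u) = 0.
    rewrite (@eq_in_count _ _ pred0) ?count_pred0 // => p /(allP hB) /=.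
    rewrite /bigger /=; case: (p.2 == 0) => /=; lia.
  have -> : count (fun p => bigger p (j.+1, e.+1)) (take c u) = c.
    rewrite (@eq_in_count _ _ predT) ?count_predT ?sA // => p /(allP hA) /=.
    rewrite /bigger /=; case: (p.2 == 0) => /=; lia.
  rewrite /tm /=; lia.
Qed.

Lemma set_nth_catA (A C : seq (nat * nat)) x z n : n = size A ->
  set_nth (0, 0) (A ++ x :: C) n z = A ++ z :: C.
Proof. by move=> ->; elim: A => [|a A IH] //=; rewrite IH. Qed.

Lemma modK3 r z e : z < r -> e < r -> ((z + e) %% r + (r - e)) %% r = z.
Proof.
move=> zr er; rewrite modnDml (_ : z + e + (r - e) = z + r); last lia.
by rewrite -modnDmr modnn addn0 modn_small.
Qed.

Lemma sor_insS r j u c e : 0 < r -> size u = j ->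
  all (fun p => (p.1 <= j) && (p.2 < r)) u -> c <= j -> e < r ->
  sor_aux r j.+1 (insS r j u c e) = contrib j c e + sor_aux r j u.
Proof.
move=> r0 sz hu hc er.
have hA : has (fun p : nat * nat => p.1 == j.+1) (take c u) = false.
  apply/hasPn => p /mem_take /(allP hu) /andP [h _]; apply/negP => /eqP; lia.
set w := insS r j u c e.
have hf : find (fun p : nat * nat => p.1 == j.+1) w = c.
  rewrite /w /insS; case: ltnP => hcj.
  - by rewrite find_cat hA /= eqxx addn0 size_take sz hcj.
  - have -> : c = j by lia.
    rewrite find_cat (_ : has _ u = false) /= ?eqxx ?addn0 ?sz //.
    by apply/hasPn => p /(allP hu) /andP [h _]; apply/negP => /eqP; lia.
have hn : nth (0, 0) w c = (j.+1, (r - e) %% r).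
  rewrite /w /insS; case: ltnP => hcj.
  - by rewrite nth_cat size_take sz hcj ltnn subnn.
  - have -> : c = j by lia.
    by rewrite nth_cat sz ltnn subnn.
rewrite /= hf hn /= modn_mod modK1 // ltnS subSS subn1 /contrib /=.
congr (_ + sor_aux r j _).
have szA : size (take c u) = c by rewrite size_take sz; case: ltngtP hc; lia.
rewrite /w /insS; case: ltnP => hcj.
- have hcu : c < size u by rewrite sz.
  have ucr : (nth dfl u c).2 < r.
    by have /andP[_ ->] := allP hu (nth dfl u c) (mem_nth dfl hcu).
  set A := take c u; set B := drop c.+1 u.
  have hj : j = size (A ++ (nth dfl u c) :: B).
    by rewrite size_cat szA /= size_drop sz; lia.
  have e1 : forall x y, nth (0,0) (A ++ x :: B ++ [:: y]) j = y.
    move=> x y; rewrite hj -cat_cons catA nth_cat !size_cat /= ltnn subnn //.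
  rewrite e1 /= modK3 // set_nth_catA // -cat_cons catA take_size_cat.
    by rewrite -surjective_pairing /A /B -(drop_nth dfl hcu) cat_take_drop.
  by rewrite hj !size_cat.
- by rewrite take_size_cat.
Qed.

Definition swapw i (w : seq (nat * nat)) :=
  take i w ++ nth dfl w i.+1 :: nth dfl w i :: drop i.+2 w.

Lemma swap_dec i w : i.+1 < size w ->
  w = take i w ++ nth dfl w i :: nth dfl w i.+1 :: drop i.+2 w.
Proof.
move=> h; rewrite -(drop_nth dfl h) -(drop_nth dfl) ?cat_take_drop //; lia.
Qed.

Lemma size_swapw i w : i.+1 < size w -> size (swapw i w) = size w.
Proof.
move=> h; rewrite {2}(swap_dec h) /swapw !size_cat /=; done.
Qed.

Lemma nth_swapw i w k : i.+1 < size w ->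
  nth dfl (swapw i w) k = nth dfl w (if k == i then i.+1 else if k == i.+1 then i else k).
Proof.
move=> h; have sT : size (take i w) = i by rewrite size_take; case: ltnP; lia.
rewrite /swapw nth_cat sT; case: (ltnP k i) => hk.
- have e1 : (k == i) = false by apply/negbTE/eqP; lia.
  have e2 : (k == i.+1) = false by apply/negbTE/eqP; lia.
  by rewrite e1 e2 nth_take.
- have [d ->] : exists d, k = i + d by exists (k - i); lia.
  rewrite addKn; case: d => [|[|d]] /=.
  + by rewrite addn0 eqxx.
  + by rewrite addn1 eqxx (_ : (i.+1 == i) = false) //; apply/negbTE/eqP; lia.
  + have e1 : (i + d.+2 == i) = false by apply/negbTE/eqP; lia.
    have e2 : (i + d.+2 == i.+1) = false by apply/negbTE/eqP; lia.
    by rewrite e1 e2 nth_drop; congr nth; lia.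
Qed.

Lemma Lw_swapw i w : i.+1 < size w ->
  Lw (swapw i w) + bigger (nth dfl w i) (nth dfl w i.+1) =
  Lw w + bigger (nth dfl w i.+1) (nth dfl w i).
Proof. move=> h; by rewrite /swapw Lw_swap -swap_dec. Qed.

Definition hmod r (w : seq (nat * nat)) :=
  if w is p :: b then (p.1, (p.2 + 1) %% r) :: b else w.

Lemma count_iota_lt m k v : count (fun x => x < v) (iota m k) = minn k (v - m).
Proof. elim: k m => [|k IH] m /=; first by rewrite min0n. rewrite IH; lia. Qed.

Lemma count_fst_lt v b n : perm_eq (v :: map fst b) (iota 1 n) ->
  count (fun q : nat * nat => q.1 < v) b = v.-1.
Proof.
move=> pf; have vin : v \in iota 1 n by rewrite -(perm_mem pf) mem_head.
move: vin; rewrite mem_iota => hv.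
move/seq.permP: pf => /(_ (fun x => x < v)) /=; rewrite ltnn count_iota_lt count_map /=.
rewrite add0n => E; rewrite (eq_count (a2 := preim fst (fun x : nat => x < v))) // E; lia.
Qed.

Lemma count_bigger0 v z b : v \notin map fst b -> 0 < z ->
  count (bigger (v, 0)) b = count (bigger (v, z)) b + count (fun q : nat * nat => q.1 < v) b.
Proof.
move=> vb z0; elim: b vb => [|q b IH] //=; rewrite inE negb_or => /andP [vq vb].
rewrite IH // /bigger /=; have -> : (z == 0) = false by apply/negbTE; lia.
move: vq; case: (q.2 == 0) => /=; case: ltngtP => //= *; lia.
Qed.

Lemma count_bigger_nz v z z' b : 0 < z -> 0 < z' ->
  count (bigger (v, z)) b = count (bigger (v, z')) b.
Proof.
move=> z0 z0'; apply: eq_count => q; rewrite /bigger /=.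
have -> : (z == 0) = false by apply/negbTE; lia.
by have -> : (z' == 0) = false by apply/negbTE; lia.
Qed.

Lemma Lw_hmod r n p b : valid r n (p :: b) ->
  Lw (hmod r (p :: b)) <= Lw (p :: b) + 1 /\
  (p.2.+1 < r -> Lw (hmod r (p :: b)) = Lw (p :: b) + 1).
Proof.
move=> vw; have zr : p.2 < r by apply: (valid_col vw); rewrite mem_head.
have hv : 0 < p.1 by have /andP[] := valid_fst vw (mem_head p b).
case/and3P: vw => _ pf _.
have U : uniq (p.1 :: map fst b) by rewrite (perm_uniq pf) iota_uniq.
have vb : p.1 \notin map fst b by case/andP: U.
have cl := count_fst_lt pf.
clear U pf; rewrite /hmod /Lw /=; case: p zr hv vb cl => v z /= zr hv vb cl.
have [z0|z0] := posnP z.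
- subst z; have [r1|r1] := eqVneq r 1.
  + subst r; rewrite modnn /=; split; lia.
  + have -> : (0 + 1) %% r = 1 by rewrite modn_small; lia.
    rewrite (count_bigger0 (z := 1)) // cl /tm /=; split; lia.
- have [e|e] := eqVneq z.+1 r.
  + have -> : (z + 1) %% r = 0 by rewrite addn1 e modnn.
    rewrite (count_bigger0 (z := z)) // cl /tm /=.
    have -> : (z == 0) = false by apply/negbTE; lia.
    split; lia.
  + have -> : (z + 1) %% r = z.+1 by rewrite modn_small; lia.
    rewrite (count_bigger_nz _ (z' := z.+1)) // /tm /=.
    have -> : (z == 0) = false by apply/negbTE; lia.
    split; lia.
Qed.

Section Grp.
Variables r n : nat.
Hypothesis r0 : 0 < r.

Lemma card_Grn : #|{: Grn r n}| = n`! * r ^ n.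
Proof. by rewrite card_prod card_Sn card_ffun !card_ord prednK. Qed.

Lemma size_word (pi : Grn r n) : size (word_of pi) = n.
Proof. by rewrite size_map size_enum_ord. Qed.

Lemma nth_word (pi : Grn r n) (i : 'I_n) :
  nth dfl (word_of pi) i = ((val (pi.1 i)).+1, val (pi.2 i)).
Proof. by rewrite /word_of (nth_map i) ?size_enum_ord // nth_ord_enum. Qed.

Lemma word_inj : injective (@word_of r n).
Proof.
move=> [s1 z1] [s2 z2] E.
have H i : ((val (s1 i)).+1, val (z1 i)) = ((val (s2 i)).+1, val (z2 i)).
  by rewrite -(nth_word (s1, z1)) -(nth_word (s2, z2)) E.
congr pair.
- by apply/permP => i; apply/val_inj; case: (H i).
- by apply/ffunP => i; apply/val_inj; case: (H i).
Qed.

Lemma word_valid (pi : Grn r n) : valid r n (word_of pi).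
Proof.
apply/and3P; split; first by rewrite size_word.
- have U : uniq (map fst (word_of pi)).
    rewrite /word_of -map_comp map_inj_uniq ?enum_uniq // => i j /= [].
    by move/val_inj/perm_inj.
  have S : {subset map fst (word_of pi) <= iota 1 n}.
    move=> x /mapP [p /mapP [i _ ->] ->] /=; rewrite mem_iota; have := ltn_ord (pi.1 i); lia.
  have Sz : size (iota 1 n) <= size (map fst (word_of pi)) by rewrite size_iota size_map size_word.
  exact: uniq_perm U (iota_uniq 1 n) (uniq_min_size U S Sz).2.
- apply/allP => p /mapP [i _ ->] /=; have := ltn_ord (pi.2 i); lia.
Qed.

Lemma perm_Wl ins :
  (forall j w, valid r j.+1 w -> exists u c e,
      [/\ valid r j u, c < j.+1, e < r & w = ins r j u c e]) ->
  perm_eq (map (@word_of r n) (enum {: Grn r n})) (Wl ins r n).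
Proof.
move=> Hs.
have U : uniq (map (@word_of r n) (enum {: Grn r n})) by rewrite map_inj_uniq ?enum_uniq //; exact: word_inj.
have S : {subset map (@word_of r n) (enum {: Grn r n}) <= Wl ins r n}.
  move=> w /mapP [pi _ ->]; apply: (Wl_surj Hs); exact: word_valid.
have Sz : size (Wl ins r n) <= size (map (@word_of r n) (enum {: Grn r n})).
  by rewrite size_map -cardE card_Grn size_Wl.
have E := (uniq_min_size U S Sz).2.
by apply: uniq_perm => //; rewrite (uniq_size_uniq U E) size_map -cardE card_Grn size_Wl.
Qed.

Lemma sum_Grn_Wl ins (F : seq (nat * nat) -> {poly int}) :
  (forall j w, valid r j.+1 w -> exists u c e,
      [/\ valid r j u, c < j.+1, e < r & w = ins r j u c e]) ->
  (\sum_(pi : Grn r n) F (word_of pi) = \sum_(w <- Wl ins r n) F w)%R.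
Proof.
move=> Hs; rewrite -(perm_big _ (perm_Wl Hs)) big_map big_enum //.
Qed.

End Grp.

Section CPart.
Local Open Scope ring_scope.

Definition Q (r j : nat) : {poly int} :=
  \sum_(c <- iota 0 j.+1) \sum_(e <- iota 0 r) 'X^(contrib j c e).

Lemma sum_Wl_S ins r j (F G : seq (nat * nat) -> {poly int}) :
  (forall u c e, u \in Wl ins r j -> (c < j.+1)%N -> (e < r)%N ->
     F (ins r j u c e) = 'X^(contrib j c e) * G u) ->
  \sum_(w <- Wl ins r j.+1) F w = Q r j * \sum_(u <- Wl ins r j) G u.
Proof.
move=> H; rewrite WlS big_allpairs_dep big_distrr.
apply: eq_big_seq => u uin; rewrite big_allpairs /Q big_distrl.
apply: eq_big_seq => c; rewrite mem_iota => hc; rewrite big_distrl.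
apply: eq_big_seq => e; rewrite mem_iota => he /=; apply: H => //; lia.
Qed.

Lemma sum_Wl ins r n (F : nat -> seq (nat * nat) -> {poly int}) :
  F 0%N [::] = 1 ->
  (forall j u c e, u \in Wl ins r j -> (c < j.+1)%N -> (e < r)%N ->
     F j.+1 (ins r j u c e) = 'X^(contrib j c e) * F j u) ->
  \sum_(w <- Wl ins r n) F n w = \prod_(j < n) Q r j.
Proof.
move=> F0 H; elim: n => [|n IH]; first by rewrite big_ord0 /= big_seq1.
by rewrite (sum_Wl_S (G := F n)) ?IH ?big_ord_recr 1?mulrC //; apply: H.
Qed.

Lemma qintE i : qint i = \sum_(k <- iota 0 i) 'X^k.
Proof. by rewrite /qint -(big_mkord xpredT (fun k => 'X^k)) /index_iota subn0. Qed.

Lemma sum_iota_ord (f : nat -> {poly int}) m :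
  \sum_(c <- iota 0 m) f c = \sum_(c < m) f c.
Proof. by rewrite -(big_mkord xpredT) /index_iota subn0. Qed.

Lemma contrib0 j c : contrib j c 0 = (j - c)%N.
Proof. by rewrite /contrib /= addn0. Qed.

Lemma Q_eq r j : (0 < r)%N -> Q r j = qint j.+1 * (1 + 'X^(j.+1) * qint (r - 1)).
Proof.
move=> r0; rewrite /Q.
have -> : iota 0 r = 0%N :: iota 1 (r - 1) by case: r r0 => // r' _; rewrite subn1.
under eq_bigr => c _ do rewrite big_cons contrib0.
rewrite big_split mulrDr mulr1; congr (_ + _).
- rewrite sum_iota_ord /qint.
  rewrite (reindex_inj rev_ord_inj) /=; apply: eq_bigr => [[c hc]] _ /=.
  by congr ('X^_); lia.
- rewrite !qintE big_distrr big_distrl; apply: eq_big_seq => c; rewrite mem_iota => hc.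
  rewrite (iotaDl 1 0) big_map big_distrr; apply: eq_bigr => e _ /=.
  by rewrite -!exprD /contrib add1n /=; congr ('X^_); lia.
Qed.

Lemma prodQ r n : (0 < r)%N ->
  \prod_(j < n) Q r j = qfact n * \prod_(1 <= i < n.+1) (1 + 'X^i * qint (r - 1)).
Proof.
move=> r0; rewrite [LHS](eq_bigr (fun j : 'I_n => qint j.+1 * (1 + 'X^(j.+1) * qint (r - 1)))); last by move=> j _; rewrite Q_eq. rewrite big_split /=.
by rewrite /qfact !big_add1 /= !big_mkord.
Qed.

End CPart.

Section Len.
Variables r n : nat.
Hypothesis r0 : 0 < r.

Notation G := (Grn r n).

Lemma val_addc (a b : color r) : val (addc a b) = (val a + val b) %% r.
Proof. rewrite /addc /= inordK; last by rewrite ltn_pmod. by move: (_ + _) => m; rewrite prednK. Qed.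

Lemma col_lt (c : color r) : val c < r.
Proof. by case: c => m hm /=; move: hm; rewrite prednK. Qed.

Lemma inord1_mod z : (val (inord 1 : color r) + z) %% r = (z + 1) %% r.
Proof.
have [r1|r1] := eqVneq r 1; first by subst r; rewrite !modn1.
by rewrite /= inordK ?prednK //; [rewrite addnC | lia].
Qed.

Lemma nth_hmod w k : 0 < size w ->
  nth dfl (hmod r w) k = if k == 0 then ((nth dfl w 0).1, ((nth dfl w 0).2 + 1) %% r)
                         else nth dfl w k.
Proof. by case: w => // p b _; case: k. Qed.

Lemma size_hmod w : size (hmod r w) = size w.
Proof. by case: w. Qed.

Lemma word_s0 (pi : G) : word_of (mulG pi (s0 r n)) = hmod r (word_of pi).
Proof.
apply: (@eq_from_nth _ dfl); first by rewrite size_hmod !size_word.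
move=> k; rewrite size_word => hk.
have n0 : 0 < n by lia.
rewrite nth_hmod ?size_word //.
have -> : k = Ordinal hk by [].
rewrite nth_word /mulG /s0 /= !ffunE mul1g perm1 /= val_addc.
case: eqP => [k0|k0].
- have -> : (Ordinal hk) = Ordinal n0 by apply/val_inj.
  have h0 : nth dfl (word_of pi) 0 = nth dfl (word_of pi) (Ordinal n0) by [].
  by rewrite h0 nth_word inord1_mod.
- have -> : nth dfl (word_of pi) k = nth dfl (word_of pi) (Ordinal hk) by [].
  by rewrite nth_word /= add0n modn_small ?prednK //; have := ltn_ord (pi.2 (Ordinal hk)); lia.
Qed.

Definition gi (i j : 'I_n) : G := (tperm i j, [ffun => color0 r]).

Lemma word_si (pi : G) (i j : 'I_n) : val j = i.+1 ->
  word_of (mulG pi (gi i j)) = swapw i (word_of pi).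
Proof.
move=> hj; have hin : i.+1 < size (word_of pi) by rewrite size_word -hj ltn_ord.
apply: (@eq_from_nth _ dfl); first by rewrite size_swapw // !size_word.
move=> k; rewrite size_word => hk.
rewrite nth_swapw //.
have -> : nth dfl (word_of (mulG pi (gi i j))) k =
          nth dfl (word_of (mulG pi (gi i j))) (Ordinal hk) by [].
rewrite nth_word /mulG /gi /= !ffunE permM val_addc /= add0n.
rewrite modn_small ?col_lt //.
have -> : (if k == i then i.+1 else if k == i.+1 then val i else k) =
          val (tperm i j (Ordinal hk)).
  case: tpermP => [e|e|ne1 ne2] /=.
  - have -> : k = i by rewrite -[k]/(val (Ordinal hk)) e.
    by rewrite eqxx.
  - have -> : k = i.+1 by rewrite -[k]/(val (Ordinal hk)) e.
    by rewrite eqxx (_ : (i.+1 == i) = false) //; apply/negbTE/eqP; lia.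
  - have e1 : (k == i) = false by apply/negbTE/eqP => e; apply: ne1; apply/val_inj.
    have e2 : (k == i.+1) = false by apply/negbTE/eqP => e; apply: ne2; apply/val_inj; rewrite /= hj.
    by rewrite e1 e2.
by rewrite nth_word.
Qed.

Lemma swapwK i w : i.+1 < size w -> swapw i (swapw i w) = w.
Proof.
move=> h; have h' : i.+1 < size (swapw i w) by rewrite size_swapw.
apply: (@eq_from_nth _ dfl); first by rewrite !size_swapw.
move=> k _; rewrite !nth_swapw //.
case: (eqVneq k i) => [->|ki]; first by rewrite eqxx (_ : (i.+1 == i) = false) // ; apply/negbTE/eqP; lia.
case: (eqVneq k i.+1) => [->|ki1]; first by rewrite eqxx.
by rewrite (negbTE ki) (negbTE ki1).
Qed.

Lemma mulG_siK (pi : G) (i j : 'I_n) : val j = i.+1 ->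
  mulG (mulG pi (gi i j)) (gi i j) = pi.
Proof.
by move=> hj; apply: word_inj; rewrite !word_si // swapwK // size_word -hj ltn_ord.
Qed.

Definition Lg (pi : G) := Lw (word_of pi).

Lemma gens_s0 : s0 r n \in gens r n.
Proof. exact: mem_head. Qed.

Lemma gens_si (i j : 'I_n) : val j = i.+1 -> gi i j \in gens r n.
Proof.
move=> hj; rewrite /gens inE; apply/orP; right.
apply: (@allpairs_f_dep _ _ _ (fun i j => (tperm i j, [ffun => color0 r]))).
  by rewrite mem_enum.
by rewrite mem_filter mem_enum hj eqxx.
Qed.

Lemma gensP g : g \in gens r n ->
  g = s0 r n \/ exists i j : 'I_n, val j = i.+1 /\ g = gi i j.
Proof.
rewrite /gens inE => /orP [/eqP ->|]; first by left.
move=> /allpairsPdep [i [j [_ ]]]; rewrite mem_filter => /andP [/eqP hj _] ->.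
by right; exists i, j.
Qed.

Lemma La (x : G) g : g \in gens r n -> Lg (mulG x g) <= Lg x + 1.
Proof.
case/gensP => [->|[i [j [hj ->]]]].
- rewrite /Lg word_s0; have := word_valid r0 x.
  case E: (word_of x) => [|p b] vw; first by rewrite /=.
  by case: (Lw_hmod vw).
- rewrite /Lg word_si //.
  have hin : i.+1 < size (word_of x) by rewrite size_word -hj ltn_ord.
  have := Lw_swapw hin; case: (bigger _ _); case: (bigger _ _) => /=; lia.
Qed.

Lemma word_one : word_of (one_G r n) = [seq (k.+1, 0) | k <- iota 0 n].
Proof.
rewrite /word_of /one_G -val_enum_ord -map_comp; apply: eq_map => k /=.
by rewrite perm1 ffunE.
Qed.

Lemma invw_iota m k : invw [seq (x.+1, 0) | x <- iota m k] = 0.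
Proof.
elim: k m => [|k IH] m //=; rewrite IH addn0.
apply/eqP; rewrite -leqn0 leqNgt -has_count; apply/hasPn => p /mapP [x].
by rewrite mem_iota => hx ->; rewrite /bigger /=; lia.
Qed.

Lemma Lg_one : Lg (one_G r n) = 0.
Proof.
rewrite /Lg word_one /Lw invw_iota add0n.
by elim: (iota 0 n) => //= x s ->.
Qed.

Lemma one_of (pi : G) : (forall k : 'I_n, val (pi.1 k) = k /\ val (pi.2 k) = 0) -> pi = one_G r n.
Proof.
case: pi => s z H; congr pair.
- by apply/permP => k; apply/val_inj; rewrite perm1; case: (H k).
- by apply/ffunP => k; apply/val_inj; rewrite ffunE; case: (H k).
Qed.

Lemma fst_word_neq (pi : G) a b : a < n -> b < n -> a != b ->
  (nth dfl (word_of pi) a).1 != (nth dfl (word_of pi) b).1.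
Proof.
move=> ha hb ab.
have -> : nth dfl (word_of pi) a = nth dfl (word_of pi) (Ordinal ha) by [].
have -> : nth dfl (word_of pi) b = nth dfl (word_of pi) (Ordinal hb) by [].
rewrite !nth_word /= eqSS; apply/negP => /eqP /val_inj /perm_inj /(congr1 val) /= e.
by move: ab; rewrite e eqxx.
Qed.

Lemma Lb (pi : G) : pi <> one_G r n ->
  exists x g, [/\ g \in gens r n, mulG x g = pi & Lg pi = (Lg x).+1].
Proof.
move=> hne; set w := word_of pi.
case: (boolP [exists i : 'I_n, (i.+1 < n) && bigger (nth dfl w i) (nth dfl w i.+1)]).
- case/existsP => i /andP [hi hb]; set j : 'I_n := Ordinal hi.
  exists (mulG pi (gi i j)), (gi i j); split.
  + exact: gens_si.
  + exact: mulG_siK.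
  + have hin : i.+1 < size w by rewrite size_word.
    have := Lw_swapw hin.
    rewrite (bigger_anti (p := nth dfl w i.+1)); last first.
      by apply: fst_word_neq; [exact: hi | exact: ltn_ord | apply/eqP; lia].
    rewrite hb /Lg word_si //= /w; lia.
- rewrite negb_exists => /forallP nd.
  have nd' : forall k, k.+1 < n -> ~~ bigger (nth dfl w k) (nth dfl w k.+1).
    move=> k hk; have := nd (Ordinal (ltnW hk)); rewrite /= hk //.
  case: (posnP n) => [n0|npos].
    by exfalso; apply: hne; apply: one_of => k; have := ltn_ord k; lia.
  set k0 : 'I_n := Ordinal npos.
  have w0 : nth dfl w 0 = ((pi.1 k0).+1, val (pi.2 k0)) by rewrite -nth_word.
  case: (posnP (val (pi.2 k0))) => [z0|zpos].
  + exfalso; apply: hne.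
    have allz : forall m, m < n -> (nth dfl w m).2 = 0.
      elim=> [|m IH] hm; first by rewrite w0.
      have := nd' m hm; rewrite /bigger IH /=; last lia.
      by case: eqP.
    have srt : sorted ltn (map fst w).
      apply/(sortedP 0) => m; rewrite size_map size_word => hm.
      rewrite !(nth_map dfl) ?size_word //; try lia.
      have ne : (nth dfl w m).1 != (nth dfl w m.+1).1.
        by apply: fst_word_neq; [lia | lia | apply/eqP; lia].
      have := nd' m hm; rewrite /bigger (allz m) /= ?(allz m.+1) //; last lia.
      move: ne; case: ltngtP => //.
    have fE : map fst w = iota 1 n.
      apply: (irr_sorted_eq ltn_trans ltnn srt (iota_ltn_sorted 1 n)).
      by case/and3P: (word_valid r0 pi) => _ pf _; exact: perm_mem pf.
    apply: one_of => k; split.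
    * have := congr1 (fun s => nth 0 s (val k)) fE.
      rewrite /= (nth_map dfl) ?size_word // nth_iota // /w nth_word /=; lia.
    * by have := allz k (ltn_ord k); rewrite /w nth_word.
  + set z := val (pi.2 k0) in zpos.
    have zr : z < r by apply: col_lt.
    set x : G := (pi.1, [ffun k : 'I_n => if val k == 0 then (inord z.-1 : color r) else pi.2 k]).
    have x0 : nth dfl (word_of x) 0 = ((pi.1 k0).+1, z.-1).
      have -> : nth dfl (word_of x) 0 = nth dfl (word_of x) k0 by [].
      rewrite nth_word /x /= ffunE /= inordK //; lia.
    have hx : hmod r (word_of x) = w.
      apply: (@eq_from_nth _ dfl); first by rewrite size_hmod !size_word.
      move=> k; rewrite size_hmod size_word => hk.
      rewrite nth_hmod ?size_word //.
      have -> : nth dfl w k = nth dfl w (Ordinal hk) by [].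
      rewrite /w nth_word; case: eqP => [k0e|k0e].
      - have -> : Ordinal hk = k0 by apply/val_inj.
        by rewrite x0 /= addn1 prednK // modn_small.
      - have -> : nth dfl (word_of x) k = nth dfl (word_of x) (Ordinal hk) by [].
        rewrite nth_word /x /= ffunE /=.
        by have -> : (k == 0) = false by apply/negbTE/eqP.
    exists x, (s0 r n); split.
    * exact: gens_s0.
    * by apply: word_inj; rewrite word_s0 hx.
    * rewrite /Lg -/w -hx; have vx := word_valid r0 x.
      move: x0 vx; case: (word_of x) => [|p b] /=; first by rewrite /dfl => -[] //.
      move=> -> vx; rewrite ((Lw_hmod vx).2) ?addn1 //=; lia.
Qed.
End Len.

Section Len2.
Variables r n : nat.
Hypothesis r0 : 0 < r.
Notation G := (Grn r n).

Lemma R1 k (pi : G) : pi \in reach r n k -> Lg pi <= k.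
Proof.
elim: k pi => [|k IH] pi /=.
  by move/set1P => ->; rewrite Lg_one.
case/imset2P => x s xin sin ->.
have := La r0 x sin; have := IH x xin; lia.
Qed.

Lemma R2 m (pi : G) : Lg pi = m -> pi \in reach r n m.
Proof.
elim: m pi => [|m IH] pi hL.
  case: (eqVneq pi (one_G r n)) => [->|ne]; first exact: set11.
  have ne2 : pi <> one_G r n by apply/eqP.
  by have [x [g [_ _ h]]] := Lb r0 ne2; rewrite hL in h.
have ne : pi <> one_G r n by move=> e; rewrite e Lg_one in hL.
have [x [g [gin e h]]] := Lb r0 ne.
rewrite -e /=; apply: imset2_f => //; apply: IH; lia.
Qed.

Lemma R3 k (pi : G) : Lg pi = k -> forall m, m <= k -> exists x : G, Lg x = m.
Proof.
elim: k pi => [|k IH] pi hL m hm.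
  by exists pi; rewrite hL; lia.
case: (ltnP m k.+1) => hm'; last by exists pi; lia.
have ne : pi <> one_G r n by move=> e; rewrite e Lg_one in hL.
have [x [g [_ _ h]]] := Lb r0 ne.
apply: (IH x); lia.
Qed.

Lemma Lg_bound (pi : G) : Lg pi < #|{: G}|.
Proof.
pose f (m : 'I_(Lg pi).+1) : G := odflt (one_G r n) [pick x : G | Lg x == m].
have fP (m : 'I_(Lg pi).+1) : Lg (f m) = m.
  rewrite /f; case: pickP => [x /eqP //|none].
  have [x hx] := R3 (erefl (Lg pi)) (ltnSE (ltn_ord m)).
  by have := none x; rewrite hx eqxx.
have finj : injective f by move=> a b e; apply: ord_inj; rewrite -(fP a) -(fP b) e.
by have := leq_card f finj; rewrite card_ord.
Qed.

Lemma len_Lg (pi : G) : len pi = Lg pi.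
Proof.
rewrite /len; set s := iota 0 #|{: G}|.+1; set P := fun k => pi \in reach r n k.
have hLin : Lg pi < size s by rewrite size_iota; have := Lg_bound pi; lia.
have hP : P (Lg pi) by apply: R2.
have hh : has P s by apply/hasP; exists (Lg pi) => //; rewrite mem_iota; rewrite size_iota in hLin; lia.
have hi := hh; rewrite has_find in hi.
have Pi := nth_find 0 hh; rewrite nth_iota ?add0n in Pi; last by rewrite size_iota in hi.
have h1 := R1 Pi.
case: (ltnP (Lg pi) (find P s)) => h2; last lia.
have := before_find 0 h2; rewrite nth_iota ?add0n; first by rewrite hP.
by rewrite size_iota in hLin.
Qed.

End Len2.

Lemma Wl_valid ins r j w : 0 < r ->
  (forall j w, valid r j.+1 w -> exists u c e,
      [/\ valid r j u, c < j.+1, e < r & w = ins r j u c e]) ->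
  w \in Wl ins r j -> valid r j w.
Proof.
move=> r0 Hs; rewrite -(perm_mem (@perm_Wl r j r0 ins Hs)) => /mapP [pi _ ->].
exact: word_valid.
Qed.

Unset Implicit Arguments.
Theorem theorem2p3 (r n : nat) : 0 < r -> 0 < n ->
  (\sum_(pi : Grn r n) 'X^(len pi) = \sum_(pi : Grn r n) 'X^(sor pi) :> {poly int})%R /\
  (\sum_(pi : Grn r n) 'X^(sor pi) =
     qfact n * \prod_(1 <= i < n.+1) (1 + 'X^i * qint (r - 1)) :> {poly int})%R.
Proof.
move=> r0 _.
have HS : (\sum_(pi : Grn r n) 'X^(sor pi) = \prod_(j < n) Q r j :> {poly int})%R.
  rewrite /sor (@sum_Grn_Wl r n r0 insS (fun w => ('X^(sor_aux r n w))%R)); last first.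
    by move=> j w; apply: insS_surj.
  apply: (@sum_Wl insS r n (fun j w => ('X^(sor_aux r j w))%R)) => // j u c e uin hc he.
  have vu := Wl_valid r0 (fun j w => @insS_surj r j w r0) uin.
  rewrite sor_insS ?exprD //.
  - exact: valid_size vu.
  - by apply/allP => p pin; rewrite (valid_col vu pin) andbT; case/andP: (valid_fst vu pin).
have HL : (\sum_(pi : Grn r n) 'X^(len pi) = \prod_(j < n) Q r j :> {poly int})%R.
  under eq_bigr => pi _ do rewrite len_Lg //.
  rewrite /Lg (@sum_Grn_Wl r n r0 insL (fun w => ('X^(Lw w))%R)); last first.
    by move=> j w; apply: insL_surj.
  apply: (@sum_Wl insL r n (fun j w => ('X^(Lw w))%R)) => // j u c e uin hc he.
  have vu := Wl_valid r0 (fun j w => @insL_surj r j w) uin.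
  rewrite Lw_insL ?exprD //.
  - exact: valid_size vu.
  - by apply/allP => p pin; case/andP: (valid_fst vu pin).
by rewrite HL HS prodQ.
Qed.
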